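(* $\mathcal{E}_0\neq\mathcal{E}_1$ and $\mathcal{E}_1=\mathcal{E}_\infty$. Consequently $\mathcal{E}_d=\mathcal{E}_1$ for all $d\ge 1$.
   Context: Fix an infinite set $\mathcal{A}$ (of actions) and a finite non-empty set $T$ (of types). A typed temporal graph is a triple $(G,t,\tau)$ where $G$ is a directed graph with node set $\mathrm{nodes}(G)\subseteq\mathcal{A}$ and edge set $\mathrm{edges}(G)\subseteq\mathrm{nodes}(G)\times\mathrm{nodes}(G)$ (no rootedness or acyclicity assumed), $t\colon\mathrm{nodes}(G)\to\mathbb{R}$ and $\tau\colon\mathrm{nodes}(G)\to T$. Write $(G,t,\tau)\preceq(G',t',\tau')$ iff $\mathrm{nodes}(G)\subseteq\mathrm{nodes}(G')$, $\mathrm{edges}(G)\subseteq\mathrm{edges}(G')$, $t'|_{\mathrm{nodes}(G)}=t$ and $\tau'|_{\mathrm{nodes}(G)}=\tau$. Let $\mathcal{G}$ be the set of all finite sequences $(G_k)_{k=0}^n$ ($n\ge 0$) of typed temporal graphs $(G_k,t_k,\tau_k)$. A typed temporal graph is $\mathcal{A}$-trivial iff its node set is $\{r\}$ for some $r\in\mathcal{A}$ and it has no edges. Direct emission: $G'$ is obtained from $G$ by direct emissions iff $G\preceq G'$ and there exist a finite non-empty set $B\subseteq\mathcal{A}$ with $B\cap\mathrm{nodes}(G)=\emptyset$ and $p\in\mathrm{nodes}(G)$ such that $\mathrm{nodes}(G')=\mathrm{nodes}(G)\cup B$, $\mathrm{edges}(G')=\mathrm{edges}(G)\cup\{(p,b):b\in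 B\}$, and $t(p)<t'(b)$ for all $b\in B$. Invocation: for $\mathcal{E}\subseteq\mathcal{G}$, $G'$ is obtained from $G$ by $\mathcal{E}$-invocation iff there exist $p\in\mathrm{nodes}(G)$, a sequence $(H_i,t^H_i,\tau^H_i)_{i=0}^m\in\mathcal{E}$ with $\mathrm{nodes}(H_i)\cap\mathrm{nodes}(G)=\emptyset$ for all $i$, and a node $q_m\in\mathrm{nodes}(H_m)$ of in-degree zero in $H_m$, such that $\mathrm{nodes}(G')=\mathrm{nodes}(G)\cup\mathrm{nodes}(H_m)$, $\mathrm{edges}(G')=\mathrm{edges}(G)\cup\mathrm{edges}(H_m)\cup\{(p,q_m)\}$, $t'=t\sqcup t^H_m$, $\tau'=\tau\sqcup\tau^H_m$, and $t(p)<t^H_m(q_m)$ (here $f\sqcup g$ denotes the common extension of two maps with disjoint domains). Define $\varphi(\mathcal{E})$, for $\mathcal{E}\subseteq\mathcal{G}$, as the set of all $(G_k)_{k=0}^n\in\mathcal{G}$ such that $G_0$ is $\mathcal{A}$-trivial and, for each $0\le k<n$, $G_{k+1}$ is obtained from $G_k$ either by direct emissions or by $\mathcal{E}$-invocation. Define $\mathcal{E}_0=\varphi(\emptyset)$, $\mathcal{E}_{d+1}=\varphi(\mathcal{E}_d)$ for $d\in\mathbb{N}$, and $\mathcal{E}_\infty=\bigcup_{d\in\mathbb{N}}\mathcal{E}_d$. *)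

(* Defs.v *)
From Stdlib Require Import Reals List.
Open Scope R_scope.

Section Defs.
Variables (A T : Type).

(* Nodes and edges are subsets of A and
   A x A; [time] and [typ] are total functions whose values outside the node
   set are irrelevant (no definition below looks at them). *)
Record TTG := mkTTG {
  nodes : A -> Prop;
  edges : A -> A -> Prop;
  time : A -> R;
  typ : A -> T;
  edges_wf : forall x y, edges x y -> nodes x /\ nodes y
}.

(* finite non-empty sequences (G_0, ..., G_n): head G_0 and the tail list *)
Definition Gseq := (TTG * list TTG)%type.

Definition seq_elems (s : Gseq) : list TTG := fst s :: snd s.
Definition seq_last (s : Gseq) : TTG := last (snd s) (fst s).

Definition preceq (G G' : TTG) : Prop :=
  (forall x, nodes G x -> nodes G' x) /\
  (forall x y, edges G x y -> edges G' x y) /\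
  (forall x, nodes G x -> time G' x = time G x /\ typ G' x = typ G x).

Definition A_trivial (G : TTG) : Prop :=
  exists r : A, (forall x, nodes G x <-> x = r) /\ (forall x y, ~ edges G x y).

Definition finite_nonempty (B : A -> Prop) : Prop :=
  exists l : list A, l <> nil /\ forall x, B x <-> In x l.

Definition direct_emission (G G' : TTG) : Prop :=
  preceq G G' /\
  exists (B : A -> Prop) (p : A),
    finite_nonempty B /\
    (forall b, B b -> ~ nodes G b) /\
    nodes G p /\
    (forall x, nodes G' x <-> nodes G x \/ B x) /\
    (forall x y, edges G' x y <-> edges G x y \/ (x = p /\ B y)) /\
    (forall b, B b -> time G p < time G' b).

Definition invocation (E : Gseq -> Prop) (G G' : TTG) : Prop :=
  exists (p : A) (s : Gseq) (q : A),
    nodes G p /\ E s /\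
    (forall H, In H (seq_elems s) -> forall x, nodes H x -> ~ nodes G x) /\
    nodes (seq_last s) q /\ (forall x, ~ edges (seq_last s) x q) /\
    (forall x, nodes G' x <-> nodes G x \/ nodes (seq_last s) x) /\
    (forall x y, edges G' x y <->
        edges G x y \/ edges (seq_last s) x y \/ (x = p /\ y = q)) /\
    (forall x, nodes G x -> time G' x = time G x /\ typ G' x = typ G x) /\
    (forall x, nodes (seq_last s) x ->
        time G' x = time (seq_last s) x /\ typ G' x = typ (seq_last s) x) /\
    time G p < time (seq_last s) q.

Fixpoint chain (Rel : TTG -> TTG -> Prop) (x : TTG) (l : list TTG) : Prop :=
  match l with
  | nil => True
  | y :: l' => Rel x y /\ chain Rel y l'
  end.

Definition phi (E : Gseq -> Prop) (s : Gseq) : Prop :=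
  A_trivial (fst s) /\
  chain (fun G G' => direct_emission G G' \/ invocation E G G') (fst s) (snd s).

Fixpoint Ed (d : nat) : Gseq -> Prop :=
  match d with
  | O => phi (fun _ => False)
  | S d' => phi (Ed d')
  end.

Definition Einf (s : Gseq) : Prop := exists d : nat, Ed d s.

End Defs.

(* Main.v *)
Require Import Defs.
From Stdlib Require Import Reals List.
From Stdlib Require Import Classical ClassicalEpsilon FunctionalExtensionality PropExtensionality Lra Setoid.

Section Proofs.
Variables (A T : Type).
Arguments nodes {A T} _ _.
Arguments edges {A T} _ _ _.
Arguments time {A T} _ _.
Arguments typ {A T} _ _.
Arguments edges_wf {A T} _ _ _ _.
Arguments mkTTG {A T} _ _ _ _ _.
Arguments preceq {A T} _ _.
Arguments A_trivial {A T} _.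
Arguments direct_emission {A T} _ _.
Arguments invocation {A T} _ _ _.
Arguments chain {A T} _ _ _.
Arguments phi {A T} _ _.
Arguments seq_last {A T} _.
Arguments seq_elems {A T} _.

Definition iso (G1 G2 : TTG A T) : Prop :=
  (forall x, nodes G1 x <-> nodes G2 x) /\ (forall x y, edges G1 x y <-> edges G2 x y) /\
  (forall x, nodes G1 x -> time G1 x = time G2 x /\ typ G1 x = typ G2 x).

Lemma iso_refl (G : TTG A T) : iso G G. Proof. unfold iso; firstorder. Qed.

Lemma last_cons (a d : TTG A T) l : last (a :: l) d = last l a.
Proof. revert a d. induction l as [|b l IH]; intros a d; [reflexivity|].
  change (last (b :: l) d = last (b::l) a). rewrite !IH. reflexivity. Qed.

Lemma last_app' (l1 l2 : list (TTG A T)) d : last (l1 ++ l2) d = last l2 (last l1 d).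
Proof. revert d; induction l1 as [|a l1 IH]; intros d; [reflexivity|].
  change ((a::l1)++l2) with (a::(l1++l2)). rewrite !last_cons. apply IH. Qed.

Lemma last_in (x : TTG A T) l : In (last l x) (x :: l).
Proof. revert x; induction l as [|a l IH]; intros x; [left; reflexivity|].
  rewrite last_cons. right. apply IH. Qed.

Lemma chain_app Rl (x : TTG A T) l1 l2 :
  chain Rl x (l1 ++ l2) <-> chain Rl x l1 /\ chain Rl (last l1 x) l2.
Proof. revert x; induction l1 as [|a l1 IH]; intros x.
 - simpl. tauto.
 - change ((a::l1)++l2) with (a::(l1++l2)). rewrite last_cons. simpl. rewrite IH. tauto.
Qed.

Lemma chain_mono (R1 R2 : TTG A T -> TTG A T -> Prop) x l :
  (forall a b, R1 a b -> R2 a b) -> chain R1 x l -> chain R2 x l.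
Proof. intros H; revert x; induction l; simpl; firstorder. Qed.

Lemma last_map (f : TTG A T -> TTG A T) l d : last (map f l) (f d) = f (last l d).
Proof. revert d; induction l as [|a l IH]; intros d; [reflexivity|].
  change (map f (a::l)) with (f a :: map f l). rewrite !last_cons. apply IH. Qed.

Lemma preceq_refl (G : TTG A T) : preceq G G. Proof. unfold preceq; firstorder. Qed.
Lemma preceq_trans (G1 G2 G3 : TTG A T) : preceq G1 G2 -> preceq G2 G3 -> preceq G1 G3.
Proof. unfold preceq; intros [a [b c]] [d [e f]]; split; [|split]; auto.
 intros x Hx. destruct (c x Hx) as [c1 c2]. destruct (f x (a x Hx)) as [f1 f2]. split; congruence. Qed.

Definition DE0 (G G' : TTG A T) := direct_emission G G' \/ invocation (fun _ => False) G G'.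

Lemma DE0_de (G G' : TTG A T) : DE0 G G' -> direct_emission G G'.
Proof. intros [h|(p & s & q & _ & HE & _)]; [exact h| contradiction]. Qed.

Lemma chain_preceq (Rl : TTG A T -> TTG A T -> Prop) x l :
  (forall a b, Rl a b -> preceq a b) -> chain Rl x l ->
  forall H, In H (x :: l) -> preceq H (last l x).
Proof. intros HR; revert x; induction l as [|a l IH]; intros x Hc H Hin.
 - simpl in Hin. destruct Hin as [<-|[]]. apply preceq_refl.
 - simpl in Hc. destruct Hc as [h1 h2]. rewrite last_cons.
   destruct Hin as [<-|Hin].
   + eapply preceq_trans; [apply HR, h1|]. apply IH; [exact h2| left; reflexivity].
   + apply IH; auto.
Qed.

Lemma root_lemma (r : A) (x : TTG A T) l : (forall y, nodes x y -> y = r \/ exists z, edges x z y) ->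
  chain direct_emission x l ->
  forall y, nodes (last l x) y -> y = r \/ exists z, edges (last l x) z y.
Proof. revert x; induction l as [|a l IH]; intros x Hinv Hc; [exact Hinv|].
  simpl in Hc; destruct Hc as [h1 h2]. rewrite last_cons. apply IH; [|exact h2].
  destruct h1 as [[Pn [Pe Pt]] (B & p & _ & _ & Hp & HN & HE & _)].
  intros y Hy. apply HN in Hy. destruct Hy as [Hy|Hy].
  - destruct (Hinv y Hy) as [?|[z Hz]]; [left; auto| right; exists z; apply Pe; auto].
  - right. exists p. apply HE. right. auto.
Qed.

Definition Utime (L H : TTG A T) (x : A) : R :=
  if excluded_middle_informative (nodes L x) then time L x else time H x.
Definition Utyp (L H : TTG A T) (x : A) : T :=
  if excluded_middle_informative (nodes L x) then typ L x else typ H x.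

Definition U (L H : TTG A T) (p q : A) : TTG A T.
refine (mkTTG (fun x => nodes L x \/ nodes H x)
  (fun x y => edges L x y \/ edges H x y \/ (x = p /\ y = q /\ nodes L p /\ nodes H q))
  (Utime L H) (Utyp L H) _).
intros x y [E|[E|(-> & -> & h1 & h2)]].
 - destruct (edges_wf L x y E); auto.
 - destruct (edges_wf H x y E); auto.
 - auto.
Defined.

Lemma U_nodes L H p q x : nodes (U L H p q) x = (nodes L x \/ nodes H x). Proof. reflexivity. Qed.
Lemma U_edges L H p q x y : edges (U L H p q) x y =
  (edges L x y \/ edges H x y \/ (x = p /\ y = q /\ nodes L p /\ nodes H q)). Proof. reflexivity. Qed.
Lemma U_time L H p q x : time (U L H p q) x = Utime L H x. Proof. reflexivity. Qed.
Lemma U_typ L H p q x : typ (U L H p q) x = Utyp L H x. Proof. reflexivity. Qed.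
Lemma Utime_in L H x : nodes L x -> Utime L H x = time L x.
Proof. intros h; unfold Utime; destruct excluded_middle_informative; [reflexivity|contradiction]. Qed.
Lemma Utime_out L H x : ~ nodes L x -> Utime L H x = time H x.
Proof. intros h; unfold Utime; destruct excluded_middle_informative; [contradiction|reflexivity]. Qed.
Lemma Utyp_in L H x : nodes L x -> Utyp L H x = typ L x.
Proof. intros h; unfold Utyp; destruct excluded_middle_informative; [reflexivity|contradiction]. Qed.
Lemma Utyp_out L H x : ~ nodes L x -> Utyp L H x = typ H x.
Proof. intros h; unfold Utyp; destruct excluded_middle_informative; [contradiction|reflexivity]. Qed.

Lemma U_step L Hi H' p q :
  direct_emission Hi H' -> (forall x, nodes H' x -> ~ nodes L x) -> nodes Hi q ->
  direct_emission (U L Hi p q) (U L H' p q).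
Proof.
  intros [[Pn [Pe Pt]] (B & pp & HB & HBn & Hpp & HN & HE & Ht)] Hdis Hq.
  assert (Hq' : nodes H' q) by auto.
  split; [split; [|split]|].
  - intros x; rewrite !U_nodes; intros [h|h]; auto.
  - intros x y; rewrite !U_edges; intros [h|[h|(h1&h2&h3&h4)]]; auto. right; right; auto.
  - intros x; rewrite U_nodes; intros [h|h].
    + rewrite !U_time, !U_typ, !Utime_in, !Utyp_in by exact h. auto.
    + destruct (classic (nodes L x)) as [hL|hL].
      * rewrite !U_time, !U_typ, !Utime_in, !Utyp_in by exact hL. auto.
      * rewrite !U_time, !U_typ, !Utime_out, !Utyp_out by exact hL. apply Pt, h.
  - exists B, pp. split; [exact HB|]. split.
    + intros b hb; rewrite U_nodes; intros [h|h].
      * apply (Hdis b); [apply HN; right; exact hb| exact h].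
      * exact (HBn b hb h).
    + split; [rewrite U_nodes; right; exact Hpp|]. split.
      * intros x; rewrite !U_nodes, HN. tauto.
      * split.
        -- intros x y; rewrite !U_edges, HE. tauto.
        -- intros b hb.
           assert (h1 : ~ nodes L pp) by (apply Hdis, Pn, Hpp).
           assert (h2 : ~ nodes L b) by (apply Hdis, HN; right; exact hb).
           rewrite !U_time, (Utime_out _ _ _ h1), (Utime_out _ _ _ h2). apply Ht, hb.
Qed.

Lemma U_init L H0 p q : (forall x, nodes H0 x <-> x = q) -> (forall x y, ~ edges H0 x y) ->
  (forall x, nodes H0 x -> ~ nodes L x) -> nodes L p -> time L p < time H0 q ->
  direct_emission L (U L H0 p q).
Proof.
  intros HN0 HE0 Hdis Hp Ht.
  assert (Hq : nodes H0 q) by (apply HN0; reflexivity).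
  split; [split; [|split]|].
  - intros x h; rewrite U_nodes; auto.
  - intros x y h; rewrite U_edges; auto.
  - intros x h; rewrite U_time, U_typ, Utime_in, Utyp_in by exact h; auto.
  - exists (nodes H0), p. split.
    { exists (q :: nil); split; [discriminate|]. intros x; rewrite HN0; simpl.
      split; [intros ->; left; reflexivity| intros [h|[]]; symmetry; exact h]. }
    split; [exact Hdis|]. split; [exact Hp|]. split.
    + intros x; rewrite U_nodes; tauto.
    + split.
      * intros x y; rewrite U_edges. split.
        -- intros [h|[h|(h1&h2&h3&h4)]]; [left; exact h| destruct (HE0 _ _ h)|].
           right; split; [exact h1| subst; exact Hq].
        -- intros [h|[h1 h2]]; [left; exact h|]. right; right. apply HN0 in h2. repeat split; auto.
      * intros b hb. rewrite U_time, Utime_out by (apply Hdis; exact hb).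
        apply HN0 in hb; subst b; exact Ht.
Qed.

Lemma U_replay L p q l Hi : chain direct_emission Hi l ->
  (forall H, In H (Hi :: l) -> forall x, nodes H x -> ~ nodes L x) -> nodes Hi q ->
  chain direct_emission (U L Hi p q) (map (fun H => U L H p q) l).
Proof.
  revert Hi; induction l as [|a l IH]; intros Hi Hc Hdis Hq; [exact I|].
  simpl in Hc |- *. destruct Hc as [h1 h2]. split.
  - apply U_step; auto. apply Hdis; right; left; reflexivity.
  - apply IH; auto.
    + intros H HIn; apply Hdis; right; exact HIn.
    + apply (proj1 (proj1 h1)); exact Hq.
Qed.

Definition Rep (X : TTG A T) : Prop :=
  exists s : Gseq A T, phi (fun _ => False) s /\ iso (seq_last s) X /\
  (forall H, In H (seq_elems s) -> forall x, nodes H x -> nodes X x).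

Lemma rep_triv X : A_trivial X -> Rep X.
Proof. intros h. exists (X, nil). split; [split; [exact h| exact I]|]. split; [apply iso_refl|].
 simpl. intros H [<-|[]] x hx; exact hx. Qed.

Lemma de_iso_l L X Y : iso L X -> direct_emission X Y -> direct_emission L Y.
Proof.
  intros [Inn [Ie It]] [[Pn [Pe Pt]] (B & p & HB & HBn & Hp & HN & HE & Ht)].
  split; [split; [|split]|].
  - intros x h; apply Pn, Inn, h.
  - intros x y h; apply Pe, Ie, h.
  - intros x h. destruct (It x h) as [a b]. destruct (Pt x (proj1 (Inn x) h)) as [c d]. split; congruence.
  - exists B, p. split; [exact HB|]. split; [intros b hb h; apply (HBn b hb), Inn, h|].
    split; [apply Inn, Hp|]. split; [intros x; rewrite HN, Inn; tauto|]. split; [intros x y; rewrite HE, Ie; tauto|].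
    intros b hb. destruct (It p (proj2 (Inn p) Hp)) as [a _]. rewrite a. apply Ht, hb.
Qed.

Lemma rep_de X Y : Rep X -> direct_emission X Y -> Rep Y.
Proof. intros (s & [Htr Hc] & Hiso & Hsub) Hde. destruct s as [S0 ls].
  exists (S0, ls ++ Y :: nil). split; [split; [exact Htr|]|split].
  - apply chain_app. split; [exact Hc|]. simpl. split; [|exact I]. left. eapply de_iso_l; [exact Hiso|exact Hde].
  - unfold seq_last; simpl. rewrite last_app'. simpl. apply iso_refl.
  - intros H HIn x hx. unfold seq_elems in HIn; simpl in HIn.
    change (In H ((S0::ls) ++ Y::nil)) in HIn. apply in_app_or in HIn. destruct HIn as [h|[<-|[]]].
    + apply (proj1 (proj1 Hde)). exact (Hsub H h x hx).
    + exact hx.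
Qed.

Lemma rep_inv X Y : Rep X -> invocation (phi (fun _ => False)) X Y -> Rep Y.
Proof.
  intros (s & [Htr Hc] & [Inn [Ie It]] & Hsub).
  intros (p & sH & q & Hp & [HtrH HcH] & Hdis & Hq & Hq0 & HN & HE & Htx & Hth & Htime).
  destruct s as [S0 ls]. destruct sH as [H0 lH].
  unfold seq_last in *; unfold seq_elems in *; simpl in *.
  apply (chain_mono _ direct_emission) in HcH; [|exact DE0_de].
  destruct HtrH as (r & HN0 & HE0).
  assert (Hqr : q = r).
  { destruct (root_lemma r H0 lH) with (y := q) as [h|[z hz]]; auto.
    - intros y hy; left; apply HN0, hy.
    - destruct (Hq0 z hz). }
  subst r.
  assert (Hpre : forall H, In H (H0 :: lH) -> preceq H (last lH H0)).
  { apply chain_preceq with (Rl := direct_emission); [|exact HcH]. intros a b h; exact (proj1 h). }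
  set (L := last ls S0) in *.
  set (Hm := last lH H0) in *.
  assert (HdisL : forall H, In H (H0 :: lH) -> forall x, nodes H x -> ~ nodes L x).
  { intros H hH x hx hL. apply (Hdis H hH x hx), Inn, hL. }
  assert (HpL : nodes L p) by (apply Inn, Hp).
  assert (Hq00 : nodes H0 q) by (apply HN0; reflexivity).
  set (f := fun H => U L H p q).
  exists (S0, ls ++ f H0 :: map f lH).
  split; [split; [exact Htr|]|split].
  - apply chain_app. split; [exact Hc|]. fold L. simpl. split.
    + left. apply U_init; auto.
      * apply HdisL; left; reflexivity.
      * destruct (It p HpL) as [e _]. rewrite e.
        destruct (Hpre H0 (or_introl eq_refl)) as [_ [_ Pt]]. destruct (Pt q Hq00) as [e2 _].
        rewrite <- e2. exact Htime.
    + apply (chain_mono direct_emission); [intros; left; auto|].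
      apply U_replay; auto.
  - unfold seq_last; simpl. rewrite last_app'. rewrite last_cons. unfold f. rewrite (last_map (fun H => U L H p q)). fold Hm.
    split; [|split].
    + intros x; rewrite U_nodes, HN, Inn. tauto.
    + intros x y; rewrite U_edges, HE, Ie. tauto.
    + intros x; rewrite U_nodes; intros hx. rewrite U_time, U_typ.
      destruct (classic (nodes L x)) as [hL|hL].
      * rewrite Utime_in, Utyp_in by exact hL. destruct (It x hL) as [a b].
        destruct (Htx x (proj1 (Inn x) hL)) as [c d]. split; congruence.
      * rewrite Utime_out, Utyp_out by exact hL. destruct hx as [hx|hx]; [contradiction|].
        destruct (Hth x hx) as [c d]. split; congruence.
  - intros H HIn x hx. unfold seq_elems in HIn; simpl in HIn.
    change (In H ((S0::ls) ++ map f (H0 :: lH))) in HIn. apply in_app_or in HIn.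
    destruct HIn as [h|h].
    + apply HN. left. exact (Hsub H h x hx).
    + apply in_map_iff in h. destruct h as (H' & <- & hH'). unfold f in hx.
      rewrite U_nodes in hx. apply HN. destruct hx as [hx|hx].
      * left; apply Inn, hx.
      * right. apply (proj1 (Hpre H' hH')), hx.
Qed.

Lemma rep_chain l X : Rep X ->
  chain (fun G G' => direct_emission G G' \/ invocation (phi (fun _ => False)) G G') X l ->
  Rep (last l X).
Proof. revert X; induction l as [|a l IH]; intros X hX hc; [exact hX|].
  simpl in hc. destruct hc as [[h|h] h2]; rewrite last_cons; apply IH; auto.
  - eapply rep_de; eauto.
  - eapply rep_inv; eauto.
Qed.

Lemma inv10 (X Y : TTG A T) : invocation (phi (phi (fun _ => False))) X Y -> invocation (phi (fun _ => False)) X Y.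
Proof. intros (p & s & q & Hp & Hs & Hdis & Hq & Hq0 & HN & HE & Htx & Hth & Htime).
  destruct Hs as [Htr Hc].
  assert (HR : Rep (seq_last s)).
  { destruct s as [S0 ls]. unfold seq_last; simpl. apply rep_chain; [apply rep_triv; exact Htr| exact Hc]. }
  destruct HR as (s' & Hs' & [Inn [Ie It]] & Hsub).
  exists p, s', q. split; [exact Hp|]. split; [exact Hs'|]. split.
  { intros H hH x hx. apply (Hdis (seq_last s)); [apply last_in| exact (Hsub H hH x hx)]. }
  split; [apply Inn, Hq|]. split; [intros x h; apply (Hq0 x), Ie, h|].
  split; [intros x; rewrite HN, Inn; tauto|]. split; [intros x y; rewrite HE, Ie; tauto|].
  split; [exact Htx|]. split.
  - intros x hx. destruct (It x hx) as [a b]. destruct (Hth x (proj1 (Inn x) hx)) as [c d]. split; congruence.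
  - destruct (It q (proj2 (Inn q) Hq)) as [a _]. rewrite a. exact Htime.
Qed.

Lemma inv_mono (E E' : Gseq A T -> Prop) (X Y : TTG A T) : (forall s, E s -> E' s) ->
  invocation E X Y -> invocation E' X Y.
Proof. intros hE (p & s & q & h1 & h2 & rest). exists p, s, q. exact (conj h1 (conj (hE s h2) rest)). Qed.

Lemma phi_mono (E E' : Gseq A T -> Prop) s : (forall s, E s -> E' s) -> phi E s -> phi E' s.
Proof. intros hE [h1 h2]. split; [exact h1|]. revert h2; apply chain_mono.
  intros a b [h|h]; [left; exact h| right; eapply inv_mono; eauto]. Qed.

Lemma phi1_sub (s : Gseq A T) : phi (phi (phi (fun _ => False))) s -> phi (phi (fun _ => False)) s.
Proof. intros [h1 h2]. split; [exact h1|]. revert h2; apply chain_mono.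
  intros a b [h|h]; [left; exact h| right; apply inv10; exact h]. Qed.

Lemma Ed_sub1 d s : Ed A T d s -> Ed A T 1 s.
Proof. revert s; induction d as [|d IH]; intros s h.
  - simpl. eapply phi_mono; [|exact h]. intros _ [].
  - simpl in h |- *. apply phi1_sub. eapply phi_mono; [|exact h]. exact IH.
Qed.

Lemma Ed0_sub d s : Ed A T 0 s -> Ed A T d s.
Proof. destruct d; [auto|]. intros h. simpl. eapply phi_mono; [|exact h]. intros _ []. Qed.

Lemma Ed1_sub d s : (1 <= d)%nat -> Ed A T 1 s -> Ed A T d s.
Proof. destruct d as [|d]; [intros h; inversion h|]. intros _ h. simpl in h |- *.
  eapply phi_mono; [|exact h]. intros s0; apply Ed0_sub. Qed.

Lemma fresh (Hinf : ~ exists l : list A, forall a : A, In a l) (l : list A) : exists a, ~ In a l.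
Proof. apply NNPP; intro H. apply Hinf. exists l. intros a. apply NNPP. intro h. apply H. exists a. exact h. Qed.

Section Ex.
Variables (r r' b : A) (t0 : T).
Hypotheses (h1 : r' <> r) (h2 : b <> r) (h3 : b <> r').

Definition tm (x : A) : R :=
  if excluded_middle_informative (x = b) then 2 else if excluded_middle_informative (x = r') then 1 else 0.
Lemma tm_r : tm r = 0.
Proof. unfold tm. destruct excluded_middle_informative; [congruence|].
  destruct excluded_middle_informative; [congruence|reflexivity]. Qed.
Lemma tm_r' : tm r' = 1.
Proof. unfold tm. destruct excluded_middle_informative; [congruence|].
  destruct excluded_middle_informative; [reflexivity|congruence]. Qed.
Lemma tm_b : tm b = 2.
Proof. unfold tm. destruct excluded_middle_informative; [reflexivity|congruence]. Qed.

Definition G0 : TTG A T := mkTTG (fun x => x = r) (fun _ _ => False) tm (fun _ => t0)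
  (fun x y (h : False) => match h with end).
Definition H0 : TTG A T := mkTTG (fun x => x = r') (fun _ _ => False) tm (fun _ => t0)
  (fun x y (h : False) => match h with end).
Definition H1 : TTG A T.
refine (mkTTG (fun x => x = r' \/ x = b) (fun x y => x = r' /\ y = b) tm (fun _ => t0) _).
intros x y [-> ->]; split; [left|right]; reflexivity.
Defined.
Definition G1 : TTG A T.
refine (mkTTG (fun x => x = r \/ x = r' \/ x = b)
  (fun x y => (x = r /\ y = r') \/ (x = r' /\ y = b)) tm (fun _ => t0) _).
intros x y [[-> ->]|[-> ->]]; split; tauto.
Defined.

Lemma ex_sep : Ed A T 1 (G0, G1 :: nil) /\ ~ Ed A T 0 (G0, G1 :: nil).
Proof.
  split.
  - split.
    + exists r. split; [intros x; simpl; tauto| intros x y h; exact h].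
    + split; [|exact I]. right. exists r, (H0, H1 :: nil), r'.
      split; [reflexivity|]. split.
      { split; [exists r'; split; [intros x; simpl; tauto| intros x y h; exact h]|].
        split; [|exact I]. left. split.
        - split; [intros x h; left; exact h|]. split; [intros x y []|]. intros x _; split; reflexivity.
        - exists (fun x => x = b), r'. split.
          { exists (b :: nil). split; [discriminate|]. intros x; simpl. split; [intros ->; left; reflexivity| intros [h|[]]; symmetry; exact h]. }
          split; [intros x hx hn; simpl in hn; congruence|]. split; [reflexivity|]. split.
          + intros x; simpl; tauto.
          + split; [intros x y; simpl; tauto|]. intros x hx. simpl. subst x. rewrite tm_r', tm_b. lra. }
      split.
      { intros H hH x hx hn. simpl in hH, hn. destruct hH as [<-|[<-|[]]]; simpl in hx.
        - congruence.
        - destruct hx; congruence. }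
      split; [simpl; left; reflexivity|]. split; [intros x [_ h]; congruence|].
      split; [intros x; simpl; tauto|]. split; [intros x y; simpl; tauto|].
      split; [intros x _; split; reflexivity|]. split; [intros x _; split; reflexivity|].
      simpl. rewrite tm_r, tm_r'. lra.
  - intros [_ [[Hde|Hinv] _]].
    + destruct Hde as [_ (B & p & _ & _ & _ & _ & HE & _)].
      destruct (proj1 (HE r r') (or_introl (conj eq_refl eq_refl))) as [[]|[e1 _]].
      destruct (proj1 (HE r' b) (or_intror (conj eq_refl eq_refl))) as [[]|[e2 _]].
      congruence.
    + destruct Hinv as (_ & s & _ & _ & [] & _).
Qed.
End Ex.

End Proofs.

Theorem mainTheorem7 (A T : Type)
  (A_infinite : ~ exists l : list A, forall a : A, In a l)
  (T_finite : exists l : list T, forall x : T, In x l)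
  (T_nonempty : inhabited T) :
  Ed A T 0 <> Ed A T 1 /\
  Ed A T 1 = Einf A T /\
  (forall d : nat, (1 <= d)%nat -> Ed A T d = Ed A T 1).
Proof.
  destruct T_nonempty as [t0].
  split.
  - intro Heq.
    destruct (fresh A A_infinite nil) as [r _].
    destruct (fresh A A_infinite (r :: nil)) as [r' hr'].
    destruct (fresh A A_infinite (r :: r' :: nil)) as [b hb].
    assert (h1 : r' <> r) by (intro e; apply hr'; left; auto).
    assert (h2 : b <> r) by (intro e; apply hb; left; auto).
    assert (h3 : b <> r') by (intro e; apply hb; right; left; auto).
    destruct (ex_sep A T r r' b t0 h1 h2 h3) as [e1 e0].
    apply e0. rewrite Heq. exact e1.
  - assert (H1d : forall d, (1 <= d)%nat -> Ed A T d = Ed A T 1).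
    { intros d hd. apply functional_extensionality. intros s.
      apply propositional_extensionality. split; [apply Ed_sub1| apply Ed1_sub; exact hd]. }
    split; [|exact H1d].
    apply functional_extensionality. intros s. apply propositional_extensionality.
    split; [intros h; exists 1%nat; exact h| intros [d h]; eapply Ed_sub1; exact h].
Qed.
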